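(* Consider any state (the tree held by some replica at some time in some execution) of FugueMax, respectively of Fugue, and let $\prec$ be its list order (the traversal order including tombstones). Then: (a) For any element $D$ in the state, the left origin of $D$ is obtained as follows: starting at $D$, walk up the tree until reaching a node that is a right child of its parent; the parent of that node is $D$'s left origin (the root corresponding to $\mathit{start}$). (b) For elements $A,B$ in the state with $A\prec B$: $B$ is a descendant of $A$ in the FugueMax (respectively Fugue) tree if and only if $B$ is a descendant of $A$ in the left-origin tree.
   Context: Replicated list model: a list is replicated over replicas with unique, totally ordered replica IDs. A replica may invoke $\mathsf{insert}(i,x)$ or $\mathsf{delete}(i)$; operations are applied locally immediately and disseminated by causal broadcast (every message eventually delivered everywhere; a message is delivered only after all messages delivered at its sender before it was sent; the sender delivers its own message immediately). The left origin of an element inserted by $\mathsf{insert}(i,x)$ is the element at index $i-1$ of the inserting replica's visible list at that time, or the symbol $\mathit{start}$ if $i=0$; the left-origin tree is the tree rooted at $\mathit{start}$ in which each element's parent is its left origin. Fugue: each replica's state is a tree with a root; each non-root node has a unique ID, a value (or tombstone $\bot$), a parent, and a side ($L$ or $R$); a node may have several left and several right children. IDs are pairs $(\text{replicaID},\text{counter})$ ordered lexicographically. Traversal of node $v$: traverse its left children in sibling order, visit $v$, traverse its right children in sibling order; in Fugue siblings of the same side are ordered by increasing ID. The traversal including tombstones of the whole tree gives the list order; the visible list consists of the nodes with value $\neq\bot$. $\mathsf{insert}(i,x)$: new ID $(\text{replicaID},\text{counter})$, increment counter; leftOrigin = node of the $(i-1)$-th visible element or the root if $i=0$; rightOrigin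 = node immediately after leftOrigin in the traversal including tombstones (or $\mathit{end}$ if none). If leftOrigin has no right child, the new node is a right child of leftOrigin, otherwise a left child of rightOrigin; the node is broadcast and each replica on delivery inserts it as the given child. $\mathsf{delete}(i)$: broadcast the ID of the $i$-th visible node; on delivery its value is set to $\bot$. FugueMax: identical to Fugue except that each right child also records its rightOrigin, and right-side siblings are ordered in the reverse of the list order of their right origins (sibling with the later right origin first, $\mathit{end}$ counting as later than every node), ties (equal right origins) broken by increasing ID. Left-side siblings are still ordered by increasing ID. *)

(* Defs.v *)
From Stdlib Require List.
From mathcomp Require Import all_boot.
Set Implicit Arguments.
Unset Strict Implicit.
Unset Printing Implicit Defensive.

(* Element IDs: (replicaID, counter), ordered lexicographically. *)
Definition ID := (nat * nat)%type.
Definition id_le (a b : ID) : bool :=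
  (a.1 < b.1) || ((a.1 == b.1) && (a.2 <= b.2)).

Inductive algo := Fugue | FugueMax.

(* A tree node.
   - nval  : Some x, or None for the tombstone.
   - npar  : parent; None denotes the root (start).
   - nside : true = right child, false = left child.
   - nro   : right origin recorded at insertion; None denotes [end].
   - nlo   : ghost field: the left origin computed at insertion (the element
             at index i-1 of the inserting replica's visible list, None = start).
             It is never used by the algorithm itself. *)
Record node (V : Type) := Node {
  nid : ID; nval : option V; npar : option ID; nside : bool;
  nro : option ID; nlo : option ID }.

Section Tree.
Variables (V : Type) (a : algo).
Implicit Types (S : seq (node V)) (L : seq ID).

Definition ro_pos L (o : option ID) : nat :=
  match o with None => size L | Some d => index d L end.

(* Sibling order ("n1 comes no later than n2") among siblings of the same side.
   FugueMax right siblings: reverse list order of right origins, ties by ID. *)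
Definition sib_le L (right : bool) : rel (node V) := fun n1 n2 =>
  if right && (if a is FugueMax then true else false) then
    (ro_pos L (nro n2) < ro_pos L (nro n1)) ||
    ((ro_pos L (nro n1) == ro_pos L (nro n2)) && id_le (nid n1) (nid n2))
  else id_le (nid n1) (nid n2).

Definition kids S L (p : option ID) (right : bool) : seq ID :=
  [seq nid n | n <- sort (sib_le L right)
                       [seq n <- S | (npar n == p) && (nside n == right)]].

Fixpoint trav S L (k : nat) (p : option ID) : seq ID :=
  match k with
  | 0 => [::]
  | k'.+1 =>
      flatten [seq trav S L k' (Some c) | c <- kids S L p false]
      ++ (if p is Some v then [:: v] else [::])
      ++ flatten [seq trav S L k' (Some c) | c <- kids S L p true]
  end.

(* L is the list order of tree S: the traversal of the whole tree, where (for
   FugueMax) right siblings are ordered using the positions in L itself of their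
   right origins. *)
Definition is_list_order S L : Prop := L = trav S L (size S).+1 None.

Definition visible S (d : ID) : bool :=
  has (fun n => (nid n == d) && isSome (nval n)) S.

Definition mk_insert S L (r c i : nat) (x : V) : node V :=
  let vis := [seq d <- L | visible S d] in
  let lo := if i is i'.+1 then Some (nth (0,0) vis i') else None in
  let ro := match lo with
            | None => ohead L
            | Some d => ohead (drop (index d L).+1 L) end in
  let hasR := has (fun n => (npar n == lo) && nside n) S in
  {| nid := (r, c); nval := Some x;
     npar := if hasR then ro else lo; nside := ~~ hasR;
     nro := ro; nlo := lo |}.

Definition tombstone S (d : ID) : seq (node V) :=
  [seq if nid n == d then {| nid := nid n; nval := None; npar := npar n;
        nside := nside n; nro := nro n; nlo := nlo n |} else n | n <- S].

End Tree.

Inductive msg (V : Type) := MIns of node V | MDel of ID.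

Record rstate (V : Type) := RState {
  rtree : seq (node V); rcnt : nat; rdlv : seq nat (* delivered msg indices *) }.

(* Global configuration: list of all sent messages, each with the indices of the
   messages delivered at its sender before it was sent; and replica states. *)
Record config (V : Type) := Config {
  csent : seq (msg V * seq nat); crep : nat -> rstate V }.

Definition apply_msg V (S : seq (node V)) (m : msg V) : seq (node V) :=
  match m with MIns n => rcons S n | MDel d => tombstone S d end.

Definition upd V (f : nat -> rstate V) (r : nat) (s : rstate V) :=
  fun r' => if r' == r then s else f r'.

Definition init_config (V : Type) : config V :=
  {| csent := [::]; crep := fun _ => {| rtree := [::]; rcnt := 0; rdlv := [::] |} |}.

(* One step of an execution: a local insert/delete at some replica (applied
   locally and broadcast; the sender delivers it immediately), or a causal
   delivery of a sent message at some replica. *)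
Inductive step V (a : algo) : config V -> config V -> Prop :=
| StInsert (c : config V) r i (x : V) L :
    let st := crep c r in
    is_list_order a (rtree st) L ->
    i <= size [seq d <- L | visible (rtree st) d] ->
    let n := mk_insert (rtree st) L r (rcnt st) i x in
    step a c {| csent := rcons (csent c) (MIns n, rdlv st);
                crep := upd (crep c) r {| rtree := rcons (rtree st) n;
                                         rcnt := (rcnt st).+1;
                                         rdlv := rcons (rdlv st) (size (csent c)) |} |}
| StDelete (c : config V) r i L :
    let st := crep c r in
    is_list_order a (rtree st) L ->
    let vis := [seq d <- L | visible (rtree st) d] in
    i < size vis ->
    let d := nth (0,0) vis i in
    step a c {| csent := rcons (csent c) (MDel V d, rdlv st);
                crep := upd (crep c) r {| rtree := tombstone (rtree st) d;
                                         rcnt := rcnt st;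
                                         rdlv := rcons (rdlv st) (size (csent c)) |} |}
| StDeliver (c : config V) r k :
    let st := crep c r in
    k < size (csent c) -> k \notin rdlv st ->
    let e := nth (MDel V (0,0), [::]) (csent c) k in
    all (fun j => j \in rdlv st) e.2 ->
    step a c {| csent := csent c;
                crep := upd (crep c) r {| rtree := apply_msg (rtree st) e.1;
                                         rcnt := rcnt st;
                                         rdlv := rcons (rdlv st) k |} |}.

Inductive reachable V (a : algo) : config V -> Prop :=
| reach_init : reachable a (init_config V)
| reach_step c c' : reachable a c -> step a c c' -> reachable a c'.

Inductive lo_walk V (S : seq (node V)) : ID -> option ID -> Prop :=
| walk_right n : List.In n S -> nside n = true -> lo_walk S (nid n) (npar n)
| walk_left n y p : List.In n S -> nside n = false -> npar n = Some y ->
    lo_walk S y p -> lo_walk S (nid n) p.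

(* b is a (proper) descendant of a in the tree given by the parent map par
   (npar for the Fugue tree, nlo for the left-origin tree). *)
Inductive desc V (par : node V -> option ID) (S : seq (node V)) (a : ID) : ID -> Prop :=
| desc_child n : List.In n S -> par n = Some a -> desc par S a (nid n)
| desc_step n y : List.In n S -> par n = Some y -> desc par S a y -> desc par S a (nid n).

Definition before (L : seq ID) (x y : ID) : Prop :=
  x \in L /\ y \in L /\ index x L < index y L.

(* Main.v *)
Require Import Defs.
From Stdlib Require List.
From mathcomp Require Import all_boot.
Set Implicit Arguments. Unset Strict Implicit. Unset Printing Implicit Defensive.

Lemma InE (T : eqType) (x : T) s : List.In x s <-> x \in s.
Proof.
elim: s => [|y s IH] //=; rewrite in_cons; split.
- by move=> [->|/IH ->]; rewrite ?eqxx ?orbT.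
- by case/orP=> [/eqP->|/IH]; auto.
Qed.

Lemma In_map (T1 T2 : Type) (f : T1 -> T2) y s :
  List.In y (map f s) <-> exists x, f x = y /\ List.In x s.
Proof.
elim: s => [|z s IH] /=; first by split=> // [[x []]].
split.
- case=> [E|H]; first by exists z; auto.
  by case/IH: H => x [E H]; exists x; auto.
- case=> x [E [Ez|H]]; first by left; rewrite Ez.
  by right; apply/IH; exists x.
Qed.

Lemma In_filter (T : Type) (P : pred T) y s :
  List.In y (filter P s) <-> List.In y s /\ P y.
Proof.
elim: s => [|z s IH] /=; first by split=> // [[]].
case: ifP => Pz /=; split.
- by case=> [<-|/IH [H1 H2]]; auto.
- by case=> [[<-|H1] H2]; auto; right; apply/IH.
- by move/IH=> [H1 H2]; auto.
- by case=> [[<-|H1] H2]; [rewrite Pz in H2 | apply/IH].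
Qed.

Lemma In_nth (T : Type) (x0 : T) s i : i < size s -> List.In (nth x0 s i) s.
Proof. elim: s i => [|y s IH] [|i] //= H; auto. Qed.

Lemma In_nthE (T : Type) (y : T) s : List.In y s -> exists2 i, i < size s & nth y s i = y.
Proof.
elim: s => [|z s IH] //= [<-|/IH [i Hi Ei]]; first by exists 0.
by exists i.+1.
Qed.

Lemma In_sort (T : Type) (r : rel T) s y : List.In y (sort r s) <-> List.In y s.
Proof.
rewrite -{1}(mkseq_nth y s) /mkseq sort_map In_map; split.
- case=> i [<- /InE]; rewrite mem_sort mem_iota add0n => /andP [_ Hi].
  exact: In_nth.
- move=> H; case: (In_nthE H) => i Hi Ei; exists i; split=> //; apply/InE.
  by rewrite mem_sort mem_iota add0n Hi.
Qed.

Lemma In_rcons (T : Type) (s : seq T) x y : List.In y (rcons s x) <-> List.In y s \/ y = x.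
Proof.
elim: s => [|z s IH] /=; first by split; [case=> // ->; right | case=> // ->; left].
split.
- by case=> [->|/IH [H|H]]; auto.
- by case=> [[->|H]|H]; auto; right; apply/IH; auto.
Qed.

Lemma In_ids (V : Type) (S : seq (node V)) n : List.In n S -> nid n \in map (@nid V) S.
Proof. by move=> H; apply/InE/In_map; exists n. Qed.

Lemma ids_In (V : Type) (S : seq (node V)) x : x \in map (@nid V) S -> exists n, List.In n S /\ nid n = x.
Proof. by move/InE/In_map=> [n [H1 H2]]; exists n. Qed.

Lemma has_In (T : Type) (P : pred T) s : has P s -> exists x, List.In x s /\ P x.
Proof.
elim: s => [|y s IH] //= /orP [H|/IH [x [H1 H2]]]; first by exists y; auto.
by exists x; auto.
Qed.

Lemma uniq_inj (V : Type) (S : seq (node V)) n1 n2 :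
  uniq (map (@nid V) S) -> List.In n1 S -> List.In n2 S -> nid n1 = nid n2 -> n1 = n2.
Proof.
elim: S => [|m S IH] //= /andP [Hm HU] [<-|H1] [<-|H2] E //.
- by move: Hm; rewrite E (In_ids H2).
- by move: Hm; rewrite -E (In_ids H1).
- exact: IH.
Qed.

Section Tree.
Variables (V : Type) (a : algo) (S : seq (node V)) (L : seq ID).
Local Notation tr := (trav a S L).
Local Notation ids := (map (@nid V) S).

Lemma kidsP p s c : c \in kids a S L p s ->
  exists n, List.In n S /\ npar n = p /\ nside n = s /\ nid n = c.
Proof.
move/InE/In_map=> [n [<- /In_sort /In_filter [H1 /andP [/eqP H2 /eqP H3]]]].
by exists n.
Qed.

Lemma kids_in p s n : List.In n S -> npar n = p -> nside n = s -> nid n \in kids a S L p s.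
Proof.
move=> H1 H2 H3; apply/InE/In_map; exists n; split=> //.
by apply/In_sort/In_filter; rewrite H2 H3 !eqxx.
Qed.

Lemma trav_S k p : tr k.+1 p =
  flatten [seq tr k (Some c) | c <- kids a S L p false]
  ++ (if p is Some v then [:: v] else [::])
  ++ flatten [seq tr k (Some c) | c <- kids a S L p true].
Proof. by []. Qed.

Lemma trav_kid k p s c x : c \in kids a S L p s -> x \in tr k (Some c) -> x \in tr k.+1 p.
Proof.
move=> Hc Hx; rewrite trav_S !mem_cat.
have Hf : x \in flatten [seq tr k (Some c) | c <- kids a S L p s] by apply/flatten_mapP; exists c.
by case: s Hc Hf => _ ->; rewrite ?orbT.
Qed.

Inductive tchain : option ID -> ID -> nat -> Prop :=
| tc0 v : tchain (Some v) v 0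
| tcS n p x m : List.In n S -> npar n = p -> tchain (Some (nid n)) x m -> tchain p x m.+1.

Lemma mem_tchain p x m : tchain p x m -> forall k, m < k -> x \in tr k p.
Proof.
elim=> [v|n p' x' m' Hn Hp _ IH] [|k] // Hk.
- by rewrite trav_S !mem_cat mem_seq1 eqxx orbT.
- apply: (@trav_kid k p' (nside n) (nid n)); first exact: kids_in.
  exact: IH.
Qed.

Definition fg k p := forall x m, tchain p x m -> m < k.

Lemma fg_kid k p s c : fg k.+1 p -> c \in kids a S L p s -> fg k (Some c).
Proof.
move=> H /kidsP [n [H1 [H2 [H3 <-]]]] x m Hc.
have := H _ _ (tcS H1 H2 Hc); by [].
Qed.

Definition I2 := forall n, List.In n S -> forall p, npar n = Some p ->
  p \in ids /\ index p ids < index (nid n) ids.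
Definition I3 := forall n, List.In n S -> npar n = None -> nside n = true.
Definition I4 := forall D, List.In D S -> lo_walk S (nid D) (nlo D).

Lemma tchain_idx p x m : tchain p x m -> forall v, p = Some v -> I2 -> v \in ids ->
  x \in ids /\ index v ids + m <= index x ids.
Proof.
elim=> [w|n p' x' m' Hn Hp _ IH] v Ev HI Hv.
- by case: Ev => ->; rewrite addn0.
- rewrite Ev in Hp; have [_ Hlt] := HI n Hn v Hp.
  have [Hx Hle] := IH (nid n) erefl HI (In_ids Hn).
  split=> //; rewrite addnS; apply: leq_trans Hle; by rewrite ltn_add2r.
Qed.

Lemma fg_root : I2 -> fg (size S).+1 None.
Proof.
move=> HI x m Hc; inversion Hc; subst.
have [Hx Hle] := tchain_idx H1 erefl HI (In_ids H).
rewrite ltnS; apply: leq_ltn_trans (leq_addl _ _) (leq_ltn_trans Hle _).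
by rewrite -index_mem size_map in Hx.
Qed.

Definition ldesc x y := exists n, List.In n S /\ npar n = Some x /\ nside n = false /\
  exists m, tchain (Some (nid n)) y m.
Definition rdesc x y := exists n, List.In n S /\ npar n = Some x /\ nside n = true /\
  exists m, tchain (Some (nid n)) y m.

Definition Pidx (s : seq ID) := forall x y, ldesc x y -> x \in s -> y \in s /\ index y s < index x s.

Lemma idx_cat_l (s1 s2 : seq ID) x y : x \in s1 -> y \in s1 -> index y s1 < index x s1 ->
  index y (s1 ++ s2) < index x (s1 ++ s2).
Proof. by move=> Hx Hy; rewrite !index_cat Hx Hy. Qed.

Lemma idx_cat_r (s1 s2 : seq ID) x y : x \notin s1 -> index y s2 < index x s2 ->
  index y (s1 ++ s2) < index x (s1 ++ s2).
Proof.
move=> Hx H; rewrite !index_cat (negbTE Hx); case: ifP => Hy.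
- by apply: leq_trans (leq_addr _ _); rewrite index_mem.
- by rewrite ltn_add2l.
Qed.

Lemma Pidx_cat s1 s2 : Pidx s1 -> Pidx s2 -> Pidx (s1 ++ s2).
Proof.
move=> H1 H2 x y Hd Hx12; case Hx: (x \in s1).
- have [Hy Hi] := H1 x y Hd Hx; split; first by rewrite mem_cat Hy.
  exact: idx_cat_l.
- move: Hx12; rewrite mem_cat Hx /= => Hx2.
  have [Hy Hi] := H2 x y Hd Hx2; split; first by rewrite mem_cat Hy orbT.
  by apply: idx_cat_r Hi; rewrite Hx.
Qed.

Lemma Pidx_flatten (l : seq ID) (f : ID -> seq ID) :
  (forall c, c \in l -> Pidx (f c)) -> Pidx (flatten (map f l)).
Proof.
elim: l => [|c l IH] H /=; first by move=> x y _.
apply: Pidx_cat; first by apply: H; rewrite mem_head.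
by apply: IH => d Hd; apply: H; rewrite in_cons Hd orbT.
Qed.

Lemma LT k p : fg k p -> Pidx (tr k p).
Proof.
elim: k p => [|k IH] p Hf; first by move=> x y.
rewrite trav_S.
have HL : Pidx (flatten [seq tr k (Some c) | c <- kids a S L p false]).
  by apply: Pidx_flatten => c Hc; apply: IH; exact: fg_kid Hf Hc.
have HR : Pidx (flatten [seq tr k (Some c) | c <- kids a S L p true]).
  by apply: Pidx_flatten => c Hc; apply: IH; exact: fg_kid Hf Hc.
case: p Hf HL HR => [v|] Hf HL HR; last by apply: Pidx_cat.
set FL := flatten _ in HL *; set FR := flatten _ in HR *.
move=> x y Hd Hx12; case Hx: (x \in FL).
- have [Hy Hi] := HL x y Hd Hx; split; first by rewrite mem_cat Hy.
  exact: idx_cat_l.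
- move: Hx12; rewrite mem_cat Hx /= in_cons; case Exv: (x == v) => /= Hx3.
  + move/eqP: Exv => Exv; subst x.
    have Hy : y \in FL.
      case: Hd => n [Hn [Hp [Hs [m Hm]]]].
      apply/flatten_mapP; exists (nid n); first exact: kids_in.
      apply: (mem_tchain Hm).
      by have := Hf _ _ (tcS Hn Hp Hm).
    split; first by rewrite mem_cat Hy.
    rewrite !index_cat Hy Hx /= eqxx addn0; by rewrite index_mem.
  + have [Hy Hi] := HR x y Hd Hx3.
    split; first by rewrite mem_cat /= in_cons Hy !orbT.
    apply: idx_cat_r; first by rewrite Hx.
    by rewrite /= (eq_sym v x) Exv; case: (v == y).
Qed.


Lemma trav_ids k p x : x \in tr k p -> p = Some x \/ x \in ids.
Proof.
elim: k p => [|k IH] p //.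
have Hb : forall s, x \in flatten [seq tr k (Some c) | c <- kids a S L p s] -> x \in ids.
  move=> s /flatten_mapP [c Hc /IH [[<-]|//]].
  by case/kidsP: Hc => n [Hn [_ [_ <-]]]; exact: In_ids.
rewrite trav_S !mem_cat; case/orP=> [/Hb|/orP [|/Hb]]; auto.
by case: p {Hb} => [v|] //; rewrite mem_seq1 => /eqP ->; left.
Qed.

Definition Qd d (s : seq ID) := exists k' X Y,
  s = X ++ d :: flatten [seq tr k' (Some c) | c <- kids a S L (Some d) true] ++ Y /\
  d \notin X /\ fg k'.+1 (Some d).

Lemma Qd_catl d s1 s2 : Qd d s1 -> Qd d (s1 ++ s2).
Proof.
case=> k' [X [Y [E [H1 H2]]]]; exists k', X, (Y ++ s2); split=> //.
by rewrite E -!catA /= -!catA.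
Qed.

Lemma Qd_catr d s1 s2 : d \notin s1 -> Qd d s2 -> Qd d (s1 ++ s2).
Proof.
move=> Hd [k' [X [Y [E [H1 H2]]]]]; exists k', (s1 ++ X), Y; split.
- by rewrite E catA.
by rewrite mem_cat negb_or Hd.
Qed.

Lemma Qd_flatten d (l : seq ID) (f : ID -> seq ID) : d \in flatten (map f l) ->
  (forall c, c \in l -> d \in f c -> Qd d (f c)) -> Qd d (flatten (map f l)).
Proof.
elim: l => [|c l IH] //=; rewrite mem_cat => Hd H.
case Hc: (d \in f c).
- by apply: Qd_catl; apply: H => //; rewrite mem_head.
- rewrite Hc /= in Hd; apply: Qd_catr; first by rewrite Hc.
  by apply: IH => // c' Hc'; apply: H; rewrite in_cons Hc' orbT.
Qed.

Lemma FO k p d : fg k p -> d \in tr k p -> Qd d (tr k p).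
Proof.
elim: k p => [|k IH] p Hf //.
have Hb : forall s, d \in flatten [seq tr k (Some c) | c <- kids a S L p s] ->
    Qd d (flatten [seq tr k (Some c) | c <- kids a S L p s]).
  move=> s Hd; apply: Qd_flatten => // c Hc Hd'.
  by apply: IH => //; exact: fg_kid Hf Hc.
rewrite trav_S; case HL: (d \in flatten [seq tr k (Some c) | c <- kids a S L p false]).
  by move=> _; apply: Qd_catl; apply: Hb.
rewrite mem_cat HL /=.
case: p Hf Hb HL => [v|] Hf Hb HL.
- rewrite in_cons; case Edv: (d == v) => /= Hd.
  + move/eqP: Edv => Edv; subst v.
    exists k, (flatten [seq tr k (Some c) | c <- kids a S L (Some d) false]), [::].
    by rewrite cats0 HL.
  + apply: Qd_catr; first by rewrite HL.
    apply: (@Qd_catr d [:: v]); first by rewrite mem_seq1 Edv.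
    exact: Hb.
- move=> Hd; apply: Qd_catr; first by rewrite HL.
  exact: Hb.
Qed.

Lemma flatten_nil0 (l : seq ID) : flatten [seq tr 0 (Some c) | c <- l] = [::].
Proof. by elim: l. Qed.

Lemma FE k c p : 0 < k -> lo_walk S c p -> exists y rest, tr k (Some c) = y :: rest /\ lo_walk S y p.
Proof.
elim: k c => [|k IH] c // _ Hw.
rewrite trav_S.
case Ek: (kids a S L (Some c) false) => [|c1 l].
  by exists c; eexists.
case: k IH => [|k] IH.
  by rewrite flatten_nil0; exists c; eexists.
have : c1 \in kids a S L (Some c) false by rewrite Ek mem_head.
case/kidsP=> n1 [Hn1 [Hp1 [Hs1 Hc1]]].
have Hw1 : lo_walk S c1 p by rewrite -Hc1; apply: walk_left Hn1 Hs1 Hp1 Hw.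
have [y [rest [E Hy]]] := IH c1 erefl Hw1.
exists y; rewrite map_cons.
have -> : forall (s : seq ID) ss, flatten (s :: ss) = s ++ flatten ss by [].
by rewrite E; eexists.
Qed.

Hypothesis HLo : L = tr (size S).+1 None.

Lemma ro_walk lo : I2 -> I3 -> (forall d, lo = Some d -> d \in L) ->
  (exists m, List.In m S /\ npar m = lo /\ nside m = true) ->
  exists y, (match lo with None => ohead L
             | Some d => ohead (drop (index d L).+1 L) end) = Some y /\ lo_walk S y lo.
Proof.
move=> H2 H3 Hlo [m [Hm [Hpm Hsm]]].
have Hfg := fg_root H2.
case: lo Hlo Hpm => [d|] Hlo Hpm.
- have Hd := Hlo d erefl; rewrite {1}HLo in Hd.
  have [k' [X [Y [E [HX Hf]]]]] := FO Hfg Hd.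
  have Hidx : index d L = size X.
    by rewrite HLo E index_cat (negbTE HX) /= eqxx addn0.
  rewrite Hidx {1}HLo E -cat_rcons drop_size_cat ?size_rcons //.
  have : nid m \in kids a S L (Some d) true by exact: kids_in.
  case Ek: (kids a S L (Some d) true) => [|c1 l] // _.
  have : c1 \in kids a S L (Some d) true by rewrite Ek mem_head.
  case/kidsP=> n1 [Hn1 [Hp1 [Hs1 Hc1]]].
  have Hk : 0 < k'.
    have := Hf _ _ (tcS Hn1 Hp1 (tc0 (nid n1))); by [].
  have Hw1 : lo_walk S c1 (Some d) by rewrite -Hc1 -Hp1; apply: walk_right.
  have [y [rest [E1 Hy]]] := FE Hk Hw1.
  by exists y; rewrite /= E1.
- rewrite HLo trav_S.
  have -> : kids a S L None false = [::].
    case Ek: (kids a S L None false) => [|c l] //.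
    have : c \in kids a S L None false by rewrite Ek mem_head.
    by case/kidsP=> n [Hn [Hp [Hs _]]]; rewrite (H3 n Hn Hp) in Hs.
  have : nid m \in kids a S L None true by exact: kids_in.
  case Ek: (kids a S L None true) => [|c1 l] // _.
  have : c1 \in kids a S L None true by rewrite Ek mem_head.
  case/kidsP=> n1 [Hn1 [Hp1 [Hs1 Hc1]]].
  have Hk : 0 < size S by case: (S) Hm.
  have Hw1 : lo_walk S c1 None by rewrite -Hc1 -Hp1; apply: walk_right.
  have [y [rest [E1 Hy]]] := FE Hk Hw1.
  by exists y; rewrite /= E1.
Qed.


Lemma lo_walk_in y p : lo_walk S y p -> y \in ids.
Proof. by case=> [n Hn _|n y' p' Hn _ _ _]; exact: In_ids. Qed.

Lemma lo_desc y p : lo_walk S y p -> forall z, p = Some z -> desc (@npar V) S z y.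
Proof.
elim=> [n Hn Hs|n y' p' Hn Hs Hp _ IH] z Ez.
- by apply: desc_child.
- by apply: desc_step Hn Hp (IH z Ez).
Qed.

Lemma desc_trans (par : node V -> option ID) x y z :
  desc par S x y -> desc par S y z -> desc par S x z.
Proof.
move=> H1 H2; elim: H2 => [n Hn Hp|n y' Hn Hp _ IH].
- exact: desc_step Hn Hp H1.
- exact: desc_step Hn Hp IH.
Qed.

Lemma nlo_npar : I4 -> forall x y, desc (@nlo V) S x y -> desc (@npar V) S x y.
Proof.
move=> H4 x y; elim=> [n Hn Hp|n y' Hn Hp _ IH].
- exact: lo_desc (H4 n Hn) _ Hp.
- exact: desc_trans IH (lo_desc (H4 n Hn) Hp).
Qed.

Lemma tchain_snoc p y m n : tchain p y m -> List.In n S -> npar n = Some y ->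
  tchain p (nid n) m.+1.
Proof.
move=> H; elim: H n => [v|n' p' x m' Hn' Hp' _ IH] n Hn Hp.
- exact: tcS Hn Hp (tc0 _).
- exact: tcS Hn' Hp' (IH n Hn Hp).
Qed.

Lemma desc_split x y : desc (@npar V) S x y ->
  exists n, List.In n S /\ npar n = Some x /\ exists m, tchain (Some (nid n)) y m.
Proof.
elim=> [n Hn Hp|n y' Hn Hp _ [n0 [Hn0 [Hp0 [m Hm]]]]].
- by exists n; split=> //; split=> //; exists 0; apply: tc0.
- by exists n0; split=> //; split=> //; exists m.+1; exact: tchain_snoc Hm Hn Hp.
Qed.

Lemma tchain0 w x : tchain (Some w) x 0 -> x = w.
Proof. by move=> H; inversion H. Qed.

Lemma tchain_last_gen p x m' : tchain p x m' -> forall v m, p = Some v -> m' = m.+1 ->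
  exists n z, List.In n S /\ nid n = x /\ npar n = Some z /\ tchain (Some v) z m.
Proof.
elim=> [w|n p' x' m'' Hn Hp Hc IH] v m Ep Em //.
case: Em => Em; subst m''; rewrite Ep in Hp.
case: m Hc IH => [|m] Hc IH.
- by rewrite (tchain0 Hc); exists n, v; do 3 split=> //; apply: tc0.
- have [n2 [z [Hn2 [Ex [Hp2 Hz]]]]] := IH (nid n) m erefl erefl.
  by exists n2, z; do 3 split=> //; exact: tcS Hn Hp Hz.
Qed.

Lemma tchain_last v x m : tchain (Some v) x m.+1 ->
  exists n z, List.In n S /\ nid n = x /\ npar n = Some z /\ tchain (Some v) z m.
Proof. by move=> H; exact: tchain_last_gen H v m erefl erefl. Qed.

Lemma tchain_node v x m : List.In v ids -> tchain (Some v) x m -> exists n, List.In n S /\ nid n = x.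
Proof.
case: m => [|m] Hv H.
- rewrite (tchain0 H); by case/In_map: Hv => n [E Hn]; exists n.
- by have [n [z [Hn [E _]]]] := tchain_last H; exists n.
Qed.

Hypothesis H1 : uniq ids.
Hypothesis H2 : I2.
Hypothesis H4 : I4.

Lemma Wlem x y p : lo_walk S y p -> rdesc x y ->
  p = Some x \/ exists z, p = Some z /\ rdesc x z /\ index z ids < index y ids.
Proof.
elim=> [n Hn Hs|n y' p' Hn Hs Hp _ IH] [n0 [Hn0 [Hp0 [Hs0 [m Hm]]]]].
- case: m Hm => [|m] Hm.
  + have E := tchain0 Hm; rewrite (uniq_inj H1 Hn Hn0 E); by left.
  + have [n2 [z [Hn2 [E [Hp2 Hz]]]]] := tchain_last Hm.
    have En := uniq_inj H1 Hn2 Hn E; subst n2.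
    right; exists z; split=> //; split; first by exists n0; do 3 split=> //; exists m.
    by have [_ ->] := H2 Hn Hp2.
- case: m Hm => [|m] Hm.
  + have E := tchain0 Hm; rewrite (uniq_inj H1 Hn Hn0 E) in Hs.
    by rewrite Hs in Hs0.
  + have [n2 [z [Hn2 [E [Hp2 Hz]]]]] := tchain_last Hm.
    have En := uniq_inj H1 Hn2 Hn E; subst n2.
    rewrite Hp in Hp2; case: Hp2 => Ez; subst z.
    have [_ Hlt] := H2 Hn Hp.
    case: (IH _) => [|->|[z [Ez [Hr Hi]]]]; first by exists n0; do 3 split=> //; exists m.
    * by left.
    * by right; exists z; do 2 split=> //; exact: ltn_trans Hi Hlt.
Qed.

Lemma rdesc_lo x y : rdesc x y -> desc (@nlo V) S x y.
Proof.
move: {2}(index y ids).+1 (ltnSn (index y ids)) => N.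
elim: N y => [|N IH] y // Hy Hr.
have [nB [HnB EB]] : exists n, List.In n S /\ nid n = y.
  case: Hr => n0 [Hn0 [_ [_ [m Hm]]]].
  apply: tchain_node Hm; apply/In_map; by exists n0.
have Hw := H4 HnB; rewrite EB in Hw.
case: (Wlem Hw Hr) => [Ep|[z [Ez [Hrz Hi]]]].
- by rewrite -EB; apply: desc_child HnB Ep.
- rewrite -EB; apply: desc_step HnB Ez _.
  by apply: IH Hrz; apply: leq_trans Hi _; rewrite -ltnS.
Qed.

Lemma ldesc_before x y : ldesc x y -> x \in L -> index y L < index x L.
Proof.
move=> Hd Hx; have := LT (fg_root H2); rewrite -HLo => HP.
by have [_ ->] := HP x y Hd Hx.
Qed.

Lemma partb A B : before L A B -> (desc (@npar V) S A B <-> desc (@nlo V) S A B).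
Proof.
case=> HA [HB Hi]; split; last exact: nlo_npar.
case/desc_split=> n [Hn [Hp [m Hm]]].
case Es: (nside n).
- by apply: rdesc_lo; exists n; do 3 split=> //; exists m.
- have : ldesc A B by exists n; do 3 split=> //; exists m.
  move/ldesc_before/(_ HA) => Hlt.
  by have := ltn_trans Hi Hlt; rewrite ltnn.
Qed.

End Tree.

Section Glob.
Variable V : Type.
Implicit Types (S : seq (node V)) (n m : node V).

Definition TI S := [/\ uniq (map (@nid V) S), I2 S, I3 S & I4 S].

Definition same3 m n := [/\ nid m = nid n, npar m = npar n & nside m = nside n].

Lemma lw_mono S1 S2 x p :
  (forall n, List.In n S1 -> exists m, List.In m S2 /\ same3 m n) ->
  lo_walk S1 x p -> lo_walk S2 x p.
Proof.
move=> H; elim=> [n Hn Hs|n y p' Hn Hs Hp _ IH].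
- case: (H n Hn) => m [Hm [E1 E2 E3]]; rewrite -E1 -E2.
  by apply: walk_right Hm _; rewrite E3.
- case: (H n Hn) => m [Hm [E1 E2 E3]]; rewrite -E1.
  by apply: walk_left Hm _ _ IH; rewrite ?E3 ?E2.
Qed.

Definition sk m n := [/\ nid m = nid n, npar m = npar n, nside m = nside n & nlo m = nlo n].

Lemma sk_same3 m n : sk m n -> same3 m n.
Proof. by case=> *; split. Qed.

Lemma sk_sym m n : sk m n -> sk n m.
Proof. by case=> *; split. Qed.

Lemma sk_trans m1 m2 m3 : sk m1 m2 -> sk m2 m3 -> sk m1 m3.
Proof. by case=> E1 E2 E3 E4 [F1 F2 F3 F4]; split; congruence. Qed.

Lemma sk_refl m : sk m m.
Proof. by split. Qed.

Lemma In_tomb S d m : List.In m (tombstone S d) -> exists n, List.In n S /\ sk m n.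
Proof.
case/In_map=> n [<- Hn]; exists n; split=> //.
by case: ifP => _; split.
Qed.

Lemma tomb_In S d n : List.In n S -> exists m, List.In m (tombstone S d) /\ sk m n.
Proof.
move=> Hn; exists (if nid n == d then @Node V (nid n) None (npar n) (nside n) (nro n) (nlo n) else n).
split; first by apply/In_map; exists n; split; last exact: Hn.
by case: ifP => _; split.
Qed.

Lemma tomb_ids S d : map (@nid V) (tombstone S d) = map (@nid V) S.
Proof. by rewrite /tombstone -map_comp; apply: eq_map => n /=; case: ifP. Qed.

Lemma TI_tomb S d : TI S -> TI (tombstone S d).
Proof.
case=> H1 H2 H3 H4; split; rewrite ?tomb_ids //.
- move=> m /In_tomb [n [Hn [E1 E2 E3 E4]]] p Hp; rewrite tomb_ids E1.
  by apply: (H2 n Hn p); rewrite -E2.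
- move=> m /In_tomb [n [Hn [E1 E2 E3 E4]]] Hp; rewrite E3; apply: H3 Hn _; by rewrite -E2.
- move=> m /In_tomb [n [Hn [E1 E2 E3 E4]]]; rewrite E1 E4.
  apply: lw_mono (H4 n Hn) => n' Hn'.
  by have [m' [Hm' Hs]] := tomb_In d Hn'; exists m'; split=> //; exact: sk_same3.
Qed.

Lemma incl_rcons S n : forall n', List.In n' S -> exists m, List.In m (rcons S n) /\ same3 m n'.
Proof. by move=> n' Hn'; exists n'; split; [apply/In_rcons; left | split]. Qed.

Lemma TI_rcons S n : TI S -> nid n \notin map (@nid V) S ->
  (npar n = None -> nside n = true) -> (forall p, npar n = Some p -> p \in map (@nid V) S) ->
  lo_walk (rcons S n) (nid n) (nlo n) -> TI (rcons S n).
Proof.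
case=> H1 H2 H3 H4 Hn Hr Hp Hw; split.
- by rewrite map_rcons rcons_uniq Hn H1.
- move=> m /In_rcons [Hm|->] p Ep; rewrite map_rcons.
  + have [Hp1 Hlt] := H2 m Hm p Ep.
    by rewrite -cats1 !index_cat Hp1 (In_ids Hm) mem_cat Hp1.
  + have Hp1 := Hp p Ep.
    rewrite -cats1 !index_cat Hp1 (negbTE Hn) /= eqxx addn0 mem_cat Hp1; split=> //.
    by rewrite index_mem.
- by move=> m /In_rcons [Hm|->] Ep; [exact: H3 Hm Ep | exact: Hr].
- move=> m /In_rcons [Hm|->] //.
  exact: lw_mono (@incl_rcons S n) (H4 m Hm).
Qed.



Lemma ins_core (a : algo) S L (lo : option ID) (x : V) (id : ID) : TI S -> is_list_order a S L ->
  (forall d, lo = Some d -> d \in L /\ d \in map (@nid V) S) ->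
  let ro := match lo with None => ohead L | Some d => ohead (drop (index d L).+1 L) end in
  let hasR := has (fun n => (npar n == lo) && nside n) S in
  let n := @Node V id (Some x) (if hasR then ro else lo) (~~ hasR) ro lo in
  [/\ (npar n = None -> nside n = true),
      (forall p, npar n = Some p -> p \in map (@nid V) S) &
      lo_walk (rcons S n) (nid n) (nlo n)].
Proof.
case=> H1 H2 H3 H4 HL Hlo ro hasR n.
rewrite /n /=; case Eh: hasR.
- have [m [Hm /andP [/eqP Hpm Hsm]]] := has_In Eh.
  have [y [Ey Hw]] := @ro_walk V a S L HL lo H2 H3 (fun d E => (Hlo d E).1) (ex_intro _ m (conj Hm (conj Hpm Hsm))).
  rewrite /ro Ey; split=> //.
  + by move=> p [<-]; exact: lo_walk_in Hw.
  + apply: (@walk_left _ _ (@Node V id (Some x) (Some y) false ro lo) y lo) => //=.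
    * by apply/In_rcons; right; rewrite /ro Ey.
    * by apply: lw_mono Hw; exact: incl_rcons.
- split=> //.
  + by move=> p Ep; case: (Hlo p Ep).
  + set n0 := @Node V id _ _ _ _ _.
    have := @walk_right _ (rcons S n0) n0; rewrite /n0 /=; apply=> //.
    by apply/In_rcons; right.
Qed.

Lemma mk_insert_ok (a : algo) S L r cn i (x : V) : TI S -> is_list_order a S L ->
  i <= size [seq d <- L | visible S d] ->
  let n := mk_insert S L r cn i x in
  [/\ nid n = (r, cn), (npar n = None -> nside n = true),
      (forall p, npar n = Some p -> p \in map (@nid V) S) &
      lo_walk (rcons S n) (nid n) (nlo n)].
Proof.
move=> HT HL Hi.
have Hlo : forall d, (if i is i'.+1 then Some (nth (0,0) [seq d <- L | visible S d] i') else None) = Some d ->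
    d \in L /\ d \in map (@nid V) S.
  clear -Hi HL; case: i Hi => [|i'] // Hi d [<-].
  have := mem_nth (0, 0) Hi; rewrite mem_filter => /andP [_].
  move: (nth _ _ _) => d0 Hd; split=> //.
  by have := Hd; rewrite {1}HL => /trav_ids [].
have [A1 A2 A3] := ins_core x (r, cn) HT HL Hlo.
by split.
Qed.
End Glob.

Section Inv.
Variables (V : Type) (a : algo).
Implicit Types (S : seq (node V)) (n m : node V) (s : seq (msg V * seq nat)).

Definition dflt : msg V * seq nat := (MDel V (0,0), [::]).
Definition insnode s j : option (node V) :=
  match (nth dflt s j).1 with MIns n => Some n | MDel _ => None end.

Lemma insnode_rcons s e j : insnode (rcons s e) j =
  if j < size s then insnode s j
  else if j == size s then (match e.1 with MIns n => Some n | MDel _ => None end) else None.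
Proof. by rewrite /insnode nth_rcons; case: ifP => //; case: ifP. Qed.

Lemma insnode_size s j n : insnode s j = Some n -> j < size s.
Proof. by rewrite /insnode; case: ltnP => // H; rewrite nth_default. Qed.

Lemma insnode_lt s e j : j < size s -> insnode (rcons s e) j = insnode s j.
Proof. by move=> H; rewrite insnode_rcons H. Qed.

Definition MsgInv s n (dl : seq nat) :=
  [/\ forall j, j \in dl -> j < size s,
      npar n = None -> nside n = true,
      forall p, npar n = Some p -> exists j n', [/\ j \in dl, insnode s j = Some n' & nid n' = p] &
      forall S', (forall j n', j \in dl -> insnode s j = Some n' -> exists m, List.In m S' /\ sk m n') ->
        (exists m, List.In m S' /\ sk m n) -> lo_walk S' (nid n) (nlo n)].

Record Inv (c : config V) : Prop := {
  iT : forall r, TI (rtree (crep c r));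
  i0 : forall r j, j \in rdlv (crep c r) -> j < size (csent c);
  iA : forall r m, List.In m (rtree (crep c r)) ->
         exists j n, [/\ j \in rdlv (crep c r), insnode (csent c) j = Some n & sk m n];
  iB : forall r j n, j \in rdlv (crep c r) -> insnode (csent c) j = Some n ->
         exists m, List.In m (rtree (crep c r)) /\ sk m n;
  iId : forall j1 j2 n1 n2, insnode (csent c) j1 = Some n1 -> insnode (csent c) j2 = Some n2 ->
         nid n1 = nid n2 -> j1 = j2;
  iCnt : forall j n, insnode (csent c) j = Some n -> (nid n).2 < rcnt (crep c (nid n).1);
  iM : forall k n dl, nth dflt (csent c) k = (MIns n, dl) -> MsgInv (csent c) n dl }.

Lemma MsgInv_grow s e n dl : MsgInv s n dl -> MsgInv (rcons s e) n dl.
Proof.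
case=> Hsz Hr Hp Hw; split=> //.
- by move=> j /Hsz H; rewrite size_rcons ltnS ltnW.
- move=> p /Hp [j [n' [Hj Hi E]]]; exists j, n'; split=> //.
  by rewrite insnode_lt //; exact: Hsz Hj.
- move=> S' Hc Hn; apply: Hw Hn => j n' Hj Hi; apply: (Hc _ _ Hj).
  by rewrite insnode_lt //; exact: Hsz Hj.
Qed.

Lemma inv_init : Inv (init_config V).
Proof.
have Hn : forall j, insnode [::] j = None by move=> j; rewrite /insnode nth_nil.
split=> //=.
- by move=> r; split.
- by move=> j n; rewrite Hn.
- by move=> j n; rewrite Hn.
- by move=> k n dl; rewrite nth_nil.
Qed.

Lemma updE (f : nat -> rstate V) r st r' : upd f r st r' = if r' == r then st else f r'.
Proof. by []. Qed.

Lemma skcov S' n n' m : List.In m S' -> sk m n' -> sk n n' -> exists m, List.In m S' /\ same3 m n.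
Proof.
move=> Hm H1 H2; exists m; split=> //; apply: sk_same3; apply: sk_trans H1 _; exact: sk_sym.
Qed.



Lemma inv_insert (c : config V) r i (x : V) L :
  Inv c -> let st := crep c r in
  is_list_order a (rtree st) L ->
  i <= size [seq d <- L | visible (rtree st) d] ->
  let n := mk_insert (rtree st) L r (rcnt st) i x in
  Inv {| csent := rcons (csent c) (MIns n, rdlv st);
         crep := upd (crep c) r {| rtree := rcons (rtree st) n;
                                  rcnt := (rcnt st).+1;
                                  rdlv := rcons (rdlv st) (size (csent c)) |} |}.
Proof.
move=> HI st HL Hi n.
have [Hid Hr Hp Hw] := mk_insert_ok r (rcnt st) x (iT HI r) HL Hi.
rewrite -/n in Hid Hr Hp Hw.
set s := csent c.
have Hlt : forall r' j, j \in rdlv (crep c r') -> insnode (rcons s (MIns n, rdlv st)) j = insnode s j.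
  by move=> r' j Hj; apply: insnode_lt; exact: (i0 HI Hj).
have Hnew : insnode (rcons s (MIns n, rdlv st)) (size s) = Some n.
  by rewrite insnode_rcons ltnn eqxx.
have Hfresh : nid n \notin map (@nid V) (rtree st).
  apply/negP => /ids_In [m [Hm Em]].
  have [j [n' [Hj Hin [E1 _ _ _]]]] := iA HI Hm.
  have := iCnt HI Hin; rewrite -E1 Em Hid /= -/st; by rewrite ltnn.
have HinsE : forall j n', insnode (rcons s (MIns n, rdlv st)) j = Some n' ->
    (j < size s /\ insnode s j = Some n') \/ (j = size s /\ n' = n).
  move=> j n'; rewrite insnode_rcons; case: ifP => Hj; first by left.
  by case: ifP => // /eqP -> [<-]; right.
split => /=.
- move=> r'; rewrite updE; case: eqP => [_|_]; last exact: iT HI r'.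
  by apply: TI_rcons => //; exact: iT HI r.
- move=> r' j; rewrite updE size_rcons; case: eqP => [_|_] /=.
  + rewrite mem_rcons in_cons; case/orP=> [/eqP ->|/(i0 HI)] //.
    by move/ltnW; rewrite ltnS.
  + by move/(i0 HI)/ltnW; rewrite ltnS.
- move=> r' m; rewrite updE; case: eqP => [_|_] /=.
  + case/In_rcons=> [Hm|->].
    * have [j [n' [Hj Hin Hsk]]] := iA HI Hm.
      by exists j, n'; rewrite mem_rcons in_cons Hj orbT (Hlt r j Hj).
    * by exists (size s), n; rewrite mem_rcons mem_head Hnew; split=> //; exact: sk_refl.
  + move=> Hm; have [j [n' [Hj Hin Hsk]]] := iA HI Hm.
    by exists j, n'; rewrite (Hlt r' j Hj).
- move=> r' j n'; rewrite updE; case: eqP => [_|_] /=.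
  + rewrite mem_rcons in_cons; case/orP=> [/eqP ->|Hj].
    * rewrite Hnew => -[<-]; exists n; split; [by apply/In_rcons; right | exact: sk_refl].
    * rewrite (Hlt r j Hj) => Hin; have [m [Hm Hsk]] := iB HI Hj Hin.
      by exists m; split=> //; apply/In_rcons; left.
  + by move=> Hj; rewrite (Hlt r' j Hj) => Hin; exact: (iB HI Hj Hin).
- move=> j1 j2 n1 n2 /HinsE [[Hj1 Hi1]|[-> ->]] /HinsE [[Hj2 Hi2]|[-> ->]] E //.
  + exact: (iId HI Hi1 Hi2 E).
  + by have := iCnt HI Hi1; rewrite E Hid /= -/st ltnn.
  + by have := iCnt HI Hi2; rewrite -E Hid /= -/st ltnn.
- move=> j n' /HinsE [[Hj Hin]|[_ ->]]; rewrite updE.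
  + have H := iCnt HI Hin; case: eqP => [E|_] //=.
    by move: H; rewrite E -/st => /ltnW; rewrite ltnS.
  + by rewrite Hid /= eqxx /= ltnSn.
- move=> k n' dl; rewrite nth_rcons; case: ifP => Hk.
  + by move/(iM HI); exact: MsgInv_grow.
  case: ifP => // /eqP Ek [<- <-]; split.
  + by move=> j /(i0 HI) H; rewrite size_rcons ltnS ltnW.
  + exact: Hr.
  + move=> p /Hp /ids_In [m [Hm Em]].
    have [j [n'' [Hj Hin [E1 _ _ _]]]] := iA HI Hm.
    by exists j, n''; split=> //; [rewrite (Hlt r j Hj) | rewrite -E1].
  + move=> S' Hc Hn; apply: lw_mono Hw => m /In_rcons [Hm|->].
    * have [j [n'' [Hj Hin Hsk]]] := iA HI Hm.
      have [m' [Hm' Hsk']] := Hc j n'' Hj (etrans (Hlt r j Hj) Hin).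
      exact: skcov Hm' Hsk' Hsk.
    * case: Hn => m' [Hm' Hsk]; exists m'; split=> //; exact: sk_same3.
Qed.



Lemma inv_delete (c : config V) r d :
  Inv c -> let st := crep c r in
  Inv {| csent := rcons (csent c) (MDel V d, rdlv st);
         crep := upd (crep c) r {| rtree := tombstone (rtree st) d;
                                  rcnt := rcnt st;
                                  rdlv := rcons (rdlv st) (size (csent c)) |} |}.
Proof.
move=> HI st.
set s := csent c.
have Hlt : forall r' j, j \in rdlv (crep c r') -> insnode (rcons s (MDel V d, rdlv st)) j = insnode s j.
  by move=> r' j Hj; apply: insnode_lt; exact: (i0 HI Hj).
have HinsE : forall j n', insnode (rcons s (MDel V d, rdlv st)) j = Some n' -> insnode s j = Some n'.
  move=> j n'; rewrite insnode_rcons; case: ifP => Hj //.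
  by case: ifP.
have Hcnt : forall r', rcnt (upd (crep c) r {| rtree := tombstone (rtree st) d;
                                  rcnt := rcnt st;
                                  rdlv := rcons (rdlv st) (size (csent c)) |} r') = rcnt (crep c r').
  by move=> r'; rewrite updE; case: eqP => [->|].
split => /=.
- move=> r'; rewrite updE; case: eqP => [_|_]; last exact: iT HI r'.
  by apply: TI_tomb; exact: iT HI r.
- move=> r' j; rewrite updE size_rcons; case: eqP => [_|_] /=.
  + rewrite mem_rcons in_cons; case/orP=> [/eqP ->|/(i0 HI)] //.
    by move/ltnW; rewrite ltnS.
  + by move/(i0 HI)/ltnW; rewrite ltnS.
- move=> r' m; rewrite updE; case: eqP => [_|_] /=.
  + case/In_tomb=> m0 [Hm0 Hsk0].
    have [j [n' [Hj Hin Hsk]]] := iA HI Hm0.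
    exists j, n'; rewrite mem_rcons in_cons Hj orbT (Hlt r j Hj); split=> //.
    exact: sk_trans Hsk0 Hsk.
  + move=> Hm; have [j [n' [Hj Hin Hsk]]] := iA HI Hm.
    by exists j, n'; rewrite (Hlt r' j Hj).
- move=> r' j n'; rewrite updE; case: eqP => [_|_] /=.
  + rewrite mem_rcons in_cons; case/orP=> [/eqP ->|Hj].
    * by rewrite insnode_rcons ltnn eqxx.
    * rewrite (Hlt r j Hj) => Hin; have [m [Hm Hsk]] := iB HI Hj Hin.
      have [m' [Hm' Hsk']] := tomb_In d Hm.
      by exists m'; split=> //; exact: sk_trans Hsk' Hsk.
  + by move=> Hj; rewrite (Hlt r' j Hj) => Hin; exact: (iB HI Hj Hin).
- move=> j1 j2 n1 n2 /HinsE Hi1 /HinsE Hi2 E; exact: (iId HI Hi1 Hi2 E).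
- by move=> j n' /HinsE Hin; rewrite Hcnt; exact: (iCnt HI Hin).
- move=> k n' dl; rewrite nth_rcons; case: ifP => Hk.
  + by move/(iM HI); exact: MsgInv_grow.
  by case: ifP.
Qed.

Lemma inv_deliver (c : config V) r k :
  Inv c -> let st := crep c r in
  k < size (csent c) -> k \notin rdlv st ->
  let e := nth (MDel V (0, 0), [::]) (csent c) k in
  all (fun j => j \in rdlv st) e.2 ->
  Inv {| csent := csent c;
         crep := upd (crep c) r {| rtree := apply_msg (rtree st) e.1;
                                  rcnt := rcnt st;
                                  rdlv := rcons (rdlv st) k |} |}.
Proof.
move=> HI st Hk Hnd e Hall.
set s := csent c.
have Hdl : forall j, j \in e.2 -> j \in rdlv st by move=> j; apply: (allP Hall).
have Hcnt : forall T r', rcnt (upd (crep c) r {| rtree := T; rcnt := rcnt st;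
                                  rdlv := rcons (rdlv st) k |} r') = rcnt (crep c r').
  by move=> T r'; rewrite updE; case: eqP => [->|].
have Hi0 : forall r' j, j \in rdlv (upd (crep c) r {| rtree := apply_msg (rtree st) e.1; rcnt := rcnt st;
                                  rdlv := rcons (rdlv st) k |} r') -> j < size s.
  move=> r' j; rewrite updE; case: eqP => [_|_] /=; last exact: (i0 HI).
  by rewrite mem_rcons in_cons; case/orP=> [/eqP ->|/(i0 HI)].
have Hnth : nth dflt s k = (e.1, e.2) by rewrite /e /dflt; exact: surjective_pairing.
move: Hi0; case Ee: e.1 Hnth => [n|d] Hnth Hi0.
- have Hins : insnode s k = Some n by rewrite /insnode Hnth.
  have [Hsz Hr Hp Hw] := iM HI Hnth.
  have Hfresh : nid n \notin map (@nid V) (rtree st).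
    apply/negP => /ids_In [m [Hm Em]].
    have [j [n' [Hj Hin [E1 _ _ _]]]] := iA HI Hm.
    have Ejk := iId HI Hin Hins (etrans (esym E1) Em).
    by rewrite Ejk in Hj; rewrite Hj in Hnd.
  have Hpar : forall p, npar n = Some p -> p \in map (@nid V) (rtree st).
    move=> p /Hp [j [n' [Hj Hin E]]].
    have [m [Hm [E1 _ _ _]]] := iB HI (Hdl j Hj) Hin.
    by rewrite -E -E1; exact: In_ids.
  have Hlw : lo_walk (rcons (rtree st) n) (nid n) (nlo n).
    apply: Hw; last by exists n; split; [apply/In_rcons; right | exact: sk_refl].
    move=> j n' Hj Hin; have [m [Hm Hsk]] := iB HI (Hdl j Hj) Hin.
    by exists m; split=> //; apply/In_rcons; left.
  split => /=.
  + move=> r'; rewrite updE; case: eqP => [_|_]; last exact: iT HI r'.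
    by apply: TI_rcons => //; exact: iT HI r.
  + exact: Hi0.
  + move=> r' m; rewrite updE; case: eqP => [_|_] /=; last exact: (iA HI).
    case/In_rcons=> [Hm|->].
    * have [j [n' [Hj Hin Hsk]]] := iA HI Hm.
      by exists j, n'; rewrite mem_rcons in_cons Hj orbT.
    * by exists k, n; rewrite mem_rcons mem_head Hins; split=> //; exact: sk_refl.
  + move=> r' j n'; rewrite updE; case: eqP => [_|_] /=; last exact: (iB HI).
    rewrite mem_rcons in_cons; case/orP=> [/eqP ->|Hj].
    * rewrite Hins => -[<-]; exists n; split; [by apply/In_rcons; right | exact: sk_refl].
    * move=> Hin; have [m [Hm Hsk]] := iB HI Hj Hin.
      by exists m; split=> //; apply/In_rcons; left.
  + exact: (iId HI).
  + by move=> j n' Hin; rewrite Hcnt; exact: (iCnt HI Hin).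
  + exact: (iM HI).
- have Hins : insnode s k = None by rewrite /insnode Hnth.
  split => /=.
  + move=> r'; rewrite updE; case: eqP => [_|_]; last exact: iT HI r'.
    by apply: TI_tomb; exact: iT HI r.
  + exact: Hi0.
  + move=> r' m; rewrite updE; case: eqP => [_|_] /=; last exact: (iA HI).
    case/In_tomb=> m0 [Hm0 Hsk0].
    have [j [n' [Hj Hin Hsk]]] := iA HI Hm0.
    exists j, n'; rewrite mem_rcons in_cons Hj orbT; split=> //.
    exact: sk_trans Hsk0 Hsk.
  + move=> r' j n'; rewrite updE; case: eqP => [_|_] /=; last exact: (iB HI).
    rewrite mem_rcons in_cons; case/orP=> [/eqP ->|Hj].
    * by rewrite Hins.
    * move=> Hin; have [m [Hm Hsk]] := iB HI Hj Hin.
      have [m' [Hm' Hsk']] := tomb_In d Hm.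
      by exists m'; split=> //; exact: sk_trans Hsk' Hsk.
  + exact: (iId HI).
  + by move=> j n' Hin; rewrite Hcnt; exact: (iCnt HI Hin).
  + exact: (iM HI).
Qed.

Lemma inv_step (c c' : config V) : Inv c -> step a c c' -> Inv c'.
Proof.
move=> HI Hs; destruct Hs.
- exact: inv_insert.
- exact: inv_delete.
- exact: inv_deliver.
Qed.

Lemma inv_reach (c : config V) : reachable a c -> Inv c.
Proof.
elim=> [|c0 c1 _ IH Hs]; first exact: inv_init.
exact: inv_step IH Hs.
Qed.

End Inv.

Unset Implicit Arguments.

Theorem lemma4 (V : Type) (a : algo) (c : config V) (r : nat) :
  reachable a c ->
  let S := rtree (crep c r) in
  (forall D, List.In D S -> lo_walk S (nid D) (nlo D)) /\
  (forall L, is_list_order a S L ->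
     forall A B, List.In A S -> List.In B S -> before L (nid A) (nid B) ->
       (desc (@npar V) S (nid A) (nid B) <-> desc (@nlo V) S (nid A) (nid B))).
Proof.
move=> Hr S.
have HI := inv_reach Hr.
have [H1 H2 H3 H4] := iT HI r.
split; first exact: H4.
move=> L HL A B HA HB Hb.
exact: (partb HL H1 H2 H4 Hb).
Qed.
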